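(* Let $k$ and $n$ be natural numbers. Then $$A_k(n)=\tfrac12 D_k(n+1),$$ where $A_k(n):=\tfrac12\big(P_1(d,n)+P'_{k-1}(d,n)+P_2(d,n)+P''_{k-1}(d,n)\big)$.
   Context: The partition functions are defined as follows. - $P_1(d,n)$ is the number of partitions of $n$ into distinct parts whose smallest part exceeds $1$. - $P_2(d,n)$ is the number of partitions of $n$ into distinct parts for which the difference between the two smallest parts is at least $2$ (a partition with a single part counts vacuously). - $P'_{k-1}(d,n)$ is the number of partitions of $n$ in which all parts are distinct except that the smallest part is $1$ with multiplicity $k-1$. - $P''_{k-1}(d,n)$ is the number of partitions of $n$ into distinct parts except that the second smallest part appears with multiplicity $k-1$, where the difference between the two smallest parts is $1$. - $D_k(n)$ is the number of partitions of $n$ into non-negative parts (the part $0$ allowed) in which the smallest part appears exactly $k$ times and no other part is repeated, with $D_k(0)=1$. Its generating function is $\sum_{n\ge0}D_k(n)q^n=\sum_{m\ge0}q^{mk}(-q^{m+1};q)_\infty$. *)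

(* Defs.v *)
From mathcomp Require Import all_boot all_order all_algebra.
Set Implicit Arguments. Unset Strict Implicit. Unset Printing Implicit Defensive.
Import GRing.Theory Num.Theory.

(* A partition of n (into positive parts) is encoded as an n-tuple of
   elements of 'I_n.+1, sorted nonincreasingly, summing to n; the zero
   entries are padding.  This is a bijection with partitions of n
   (a partition of n has at most n parts, each at most n). *)
Definition is_ptn n (t : n.-tuple 'I_n.+1) : bool :=
  sorted geq (map val t) && (sumn (map val t) == n).

Definition parts_of n (t : n.-tuple 'I_n.+1) : seq nat :=
  [seq val x | x <- t & 0 < val x].

Definition ptn_count (n : nat) (P : seq nat -> bool) : nat :=
  #|[set t : n.-tuple 'I_n.+1 | is_ptn t && P (parts_of t)]|.

(* In all predicates below, p is a nonincreasing list of positive parts. *)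

Definition P1_pred (p : seq nat) : bool := uniq p && all (fun x => 1 < x) p.

Definition P2_pred (p : seq nat) : bool :=
  uniq p && (if rev p is a :: b :: _ then 2 <= b - a else true).

Definition P'_pred (k : nat) (p : seq nat) : bool :=
  (count_mem 1 p == k.-1) &&
  all (fun x => (x == 1) || (count_mem x p <= 1)) p.

Definition P''_pred (k : nat) (p : seq nat) : bool :=
  if rev (undup p) is s1 :: s2 :: _ then
    (s2 == s1 + 1) && (count_mem s1 p == 1) && (count_mem s2 p == k.-1) &&
    all (fun x => (x == s2) || (count_mem x p <= 1)) p
  else false.

Definition P1 (n : nat) : nat := ptn_count n P1_pred.
Definition P2 (n : nat) : nat := ptn_count n P2_pred.
Definition P' (k n : nat) : nat := ptn_count n (P'_pred k).
Definition P'' (k n : nat) : nat := ptn_count n (P''_pred k).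

(* D_k(n): partitions of n into nonnegative parts (0 allowed), where the
   smallest part appears exactly k times and no other part is repeated.
   Such a partition is a pair (z, t): z copies of the part 0 together with
   a partition t of n into positive parts.  In any counted partition the
   number z of zeros is either 0 or k (if 0 occurs it is the smallest part),
   so restricting z to 'I_k.+1 loses nothing. *)
Definition D_pred (k : nat) (q : seq nat) : bool :=
  (q != [::]) &&
  (count_mem (last 0 q) q == k) &&
  all (fun x => (x == last 0 q) || (count_mem x q <= 1)) q.

Definition D (k n : nat) : nat :=
  #|[set zt : 'I_k.+1 * n.-tuple 'I_n.+1 |
       is_ptn zt.2 && D_pred k (parts_of zt.2 ++ nseq zt.1 0)]|.

Definition A (k n : nat) : rat :=
  ((P1 n + P' k n + P2 n + P'' k n)%:R / 2)%R.

(* Main.v *)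
Require Import Defs.
From mathcomp Require Import all_boot all_order all_algebra.
From mathcomp Require Import zify.
Set Implicit Arguments. Unset Strict Implicit. Unset Printing Implicit Defensive.

Definition W n (p : seq nat) := [&& sorted geq p, all (leq 1) p & sumn p == n].

Lemma geq_trans' : transitive geq.
Proof. move=> x y z /= h1 h2; exact: leq_trans h2 h1. Qed.

Lemma parts_ofE n (t : n.-tuple 'I_n.+1) :
  parts_of t = [seq x <- map val t | 0 < x].
Proof. by rewrite /parts_of filter_map. Qed.

Lemma sumn_filter_pos s : sumn [seq x <- s | 0 < x] = sumn s.
Proof. by elim: s => //= -[|x] s IH //=; rewrite IH. Qed.

Lemma W_parts n (t : n.-tuple 'I_n.+1) : is_ptn t -> W n (parts_of t).
Proof.
case/andP=> hs hn; rewrite parts_ofE /W sumn_filter_pos (eqP hn) filter_all eqxx /= !andbT.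
exact: (sorted_filter geq_trans').
Qed.

Lemma size_le_sumn p : all (leq 1) p -> size p <= sumn p.
Proof. elim: p => //= x p IH /andP[h1 h2]; rewrite -add1n leq_add //; exact: IH. Qed.

Lemma mem_le_sumn p x : x \in p -> x <= sumn p.
Proof.
elim: p => //= y p IH; rewrite inE => /orP[/eqP->|h]; first exact: leq_addr.
by rewrite (leq_trans (IH h)) // leq_addl.
Qed.

Definition enc m (p : seq nat) : m.-tuple 'I_m.+1 :=
  [tuple (inord (nth 0 p i) : 'I_m.+1) | i < m].

Lemma mkseq_pad p m : size p <= m -> mkseq (nth 0 p) m = p ++ nseq (m - size p) 0.
Proof.
move=> hs; apply: (@eq_from_nth _ 0).
  by rewrite size_mkseq size_cat size_nseq subnKC.
move=> i; rewrite size_mkseq => him; rewrite nth_mkseq // nth_cat.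
case: ifP => // hi; rewrite nth_nseq nth_default //; last by rewrite leqNgt hi.
by case: ifP.
Qed.

Lemma enc_val m p : W m p -> map val (enc m p) = p ++ nseq (m - size p) 0.
Proof.
case/and3P=> _ hp /eqP hs.
have hsz : size p <= m by rewrite -hs size_le_sumn.
have -> : map val (enc m p) = map (fun i : 'I_m => val (inord (nth 0 p i) : 'I_m.+1)) (enum 'I_m).
  by rewrite /enc /= -map_comp.
rewrite -mkseq_pad // /mkseq -val_enum_ord -map_comp.
apply: eq_map => i /=; rewrite inordK // ltnS.
case: (ltnP i (size p)) => h; first by rewrite -{2}hs mem_le_sumn // mem_nth.
by rewrite nth_default.
Qed.

Lemma path_nseq0 y j : path geq y (nseq j 0).
Proof. by elim: j y => //= j IH y; rewrite IH andbT. Qed.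

Lemma enc_ptn m p : W m p -> is_ptn (enc m p).
Proof.
move=> hW; rewrite /is_ptn enc_val //; case/and3P: hW => hs _ /eqP hsum.
rewrite sumn_cat sumn_nseq ?muln0 ?mul0n addn0 hsum eqxx andbT.
case: p hs {hsum} => //= [|x p]; first by case: (m - 0) => //= j; rewrite path_nseq0.
by rewrite cat_path => ->; rewrite path_nseq0.
Qed.

Lemma enc_parts m p : W m p -> parts_of (enc m p) = p.
Proof.
move=> hW; rewrite parts_ofE enc_val // filter_cat.
case/and3P: hW => _ hp _; rewrite (all_filterP hp).
rewrite (_ : [seq x <- nseq (m - size p) 0 | 0 < x] = [::]) ?cats0 //.
by elim: (m - size p).
Qed.

Lemma nth_filter_sorted s i : sorted geq s ->
  nth 0 [seq x <- s | 0 < x] i = nth 0 s i.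
Proof.
elim: s i => //= x s IH i hs.
have hs' := path_sorted hs; have ha := order_path_min geq_trans' hs.
case: x hs ha => [|x] hs ha /=; last by case: i => //= i; exact: IH.
have h0 : [seq x <- s | 0 < x] = [::].
  apply/eqP; rewrite -size_eq0 size_filter -leqn0 leqNgt -has_count.
  by apply/hasPn=> y /(allP ha); rewrite /= leqn0 => /eqP->.
rewrite h0 nth_nil; case: i => //= i.
case: (ltnP i (size s)) => h; last by rewrite nth_default.
by have := allP ha _ (mem_nth 0 h); rewrite /= leqn0 => /eqP ->.
Qed.

Lemma enc_partsK n (t : n.-tuple 'I_n.+1) : is_ptn t -> enc n (parts_of t) = t.
Proof.
case/andP=> hs _; apply: eq_from_tnth => i; rewrite tnth_mktuple.
have e : nth 0 (parts_of t) i = tnth t i.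
  rewrite parts_ofE nth_filter_sorted // (tnth_nth ord0) (nth_map ord0) //.
  by rewrite size_tuple.
by apply: val_inj; rewrite /= e inordK.
Qed.

Definition V n (r : seq nat) := [&& sorted leq r, all (leq 1) r & sumn r == n].

Lemma WV n p : W n p = V n (rev p).
Proof. by rewrite /W /V rev_sorted all_rev sumn_rev. Qed.

Lemma ptn_le n m (P Q : pred (seq nat)) (f : seq nat -> seq nat) :
 (forall r, V n r -> P (rev r) -> V m (f r) && Q (rev (f r))) ->
 (forall r1 r2, V n r1 -> P (rev r1) -> V n r2 -> P (rev r2) -> f r1 = f r2 -> r1 = r2) ->
 ptn_count n P <= ptn_count m Q.
Proof.
move=> hf hinj; rewrite /ptn_count.
pose h := fun t : n.-tuple 'I_n.+1 => enc m (rev (f (rev (parts_of t)))).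
set S := [set t | _].
rewrite -(card_in_imset (f:=h) (D:=S)).
  apply: subset_leq_card; apply/subsetP => y /imsetP[t htS ->]; move: htS; rewrite /S inE => /andP[ht hP].
  have hV : V n (rev (parts_of t)) by rewrite -WV W_parts.
  have := hf _ hV; rewrite revK => /(_ hP) /andP[hV' hQ].
  have hW' : W m (rev (f (rev (parts_of t)))) by rewrite WV revK.
  by rewrite inE enc_ptn // enc_parts // hQ.
move=> t1 t2; rewrite !inE => /andP[ht1 hP1] /andP[ht2 hP2].
have hV1 : V n (rev (parts_of t1)) by rewrite -WV W_parts.
have hV2 : V n (rev (parts_of t2)) by rewrite -WV W_parts.
have := hf _ hV1; rewrite revK => /(_ hP1) /andP[hV1' _].
have := hf _ hV2; rewrite revK => /(_ hP2) /andP[hV2' _].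
move=> /(congr1 (@parts_of m)); rewrite /h !enc_parts ?WV ?revK // => /(congr1 rev).
rewrite !revK => /hinj; rewrite !revK => /(_ hV1 hP1 hV2 hP2) /(congr1 rev).
by rewrite !revK => e; rewrite -(enc_partsK ht1) -(enc_partsK ht2) e.
Qed.

Lemma ptn_bij n m (P Q : pred (seq nat)) (f g : seq nat -> seq nat) :
 (forall r, V n r -> P (rev r) -> V m (f r) && Q (rev (f r))) ->
 (forall r, V m r -> Q (rev r) -> V n (g r) && P (rev (g r))) ->
 (forall r, V n r -> P (rev r) -> g (f r) = r) ->
 (forall r, V m r -> Q (rev r) -> f (g r) = r) ->
 ptn_count n P = ptn_count m Q.
Proof.
move=> hf hg hgf hfg; apply/eqP; rewrite eqn_leq; apply/andP; split.
  apply: (ptn_le hf) => r1 r2 h1 p1 h2 p2 e.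
  by rewrite -(hgf _ h1 p1) -(hgf _ h2 p2) e.
apply: (ptn_le hg) => r1 r2 h1 p1 h2 p2 e.
by rewrite -(hfg _ h1 p1) -(hfg _ h2 p2) e.
Qed.

Lemma ptn_split N (P : pred (seq nat)) (c : pred (seq nat)) :
  ptn_count N P = ptn_count N (fun p => P p && c p) + ptn_count N (fun p => P p && ~~ c p).
Proof.
rewrite /ptn_count -(cardID [set t : N.-tuple 'I_N.+1 | c (parts_of t)]).
congr (_ + _); apply: eq_card => t; rewrite !inE; 
by case: (is_ptn t); case: (P _); case: (c _).
Qed.

Lemma uniq_count (p : seq nat) : uniq p = all (fun x => count_mem x p <= 1) p.
Proof.
apply/idP/idP => [hu|ha].
  by apply/allP => x hx; rewrite count_uniq_mem // hx.
apply: count_mem_uniq => x; case: (boolP (x \in p)) => h; last exact/count_memPn.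
apply/eqP; rewrite eqn_leq (allP ha x h) /=.
by rewrite -has_count has_pred1.
Qed.

Lemma last_nseq' (x y : nat) z : last x (nseq z.+1 y) = y.
Proof. by elim: z. Qed.

Lemma Dz k p z : all (leq 1) p -> 0 < z ->
  D_pred k (p ++ nseq z 0) = (z == k) && uniq p.
Proof.
move=> hp; case: z => // z _; rewrite /D_pred last_cat last_nseq'.
have hc0 : count_mem 0 p = 0.
  by apply/count_memPn; apply/negP => /(allP hp).
rewrite count_cat hc0 count_nseq /= mul1n add0n.
have -> : (p ++ nseq z.+1 0 != [::]) by case: p {hp hc0}.
rewrite all_cat /=.
have -> : all (fun x => (x == 0) || (count_mem x (p ++ nseq z.+1 0) <= 1)) (nseq z 0).
  by apply/allP => x; rewrite mem_nseq => /andP[_ ->].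
rewrite andbT /= uniq_count; congr (_ && _).
apply: eq_in_all => x hx; have := allP hp x hx; case: x hx => // x hx _ /=.
by rewrite count_cat /= count_nseq /= addn0.
Qed.

Lemma card_setb (T : finType) (b : pred T) : #|[set x | b x]| = \sum_x (b x : nat).
Proof.
rewrite -sum1dep_card big_mkcond /=; apply: eq_bigr => x _; by case: (b x).
Qed.

Lemma ptn_countE N (P : pred (seq nat)) :
  ptn_count N P = \sum_(t : N.-tuple 'I_N.+1) (is_ptn t && P (parts_of t) : nat).
Proof. by rewrite /ptn_count card_setb. Qed.

Lemma D_split k N : 0 < k -> D k N = ptn_count N (D_pred k) + ptn_count N uniq.
Proof.
case: k => // k _; rewrite /D card_setb.
rewrite -(pair_big xpredT xpredT (fun (z : 'I_k.+2) (t : N.-tuple 'I_N.+1) =>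
  (is_ptn t && D_pred k.+1 (parts_of t ++ nseq z 0) : nat))) /=.
rewrite big_ord_recl big_ord_recr /= !ptn_countE; congr (_ + _).
  by apply: eq_bigr => t _; rewrite cats0.
rewrite big1 ?add0n; last first.
  move=> i _; apply: big1 => t _.
  case ht: (is_ptn t) => //=; case/and3P: (W_parts ht) => _ hp _.
  have := Dz k.+1 hp (ltn0Sn (0+i)); rewrite /= => ->.
  by rewrite eqSS add0n ltn_eqF.
apply: eq_bigr => t _; case ht: (is_ptn t) => //=; case/and3P: (W_parts ht) => _ hp _.
by have := Dz k.+1 hp (ltn0Sn k); rewrite /= => ->; rewrite eqxx.
Qed.

Lemma sorted_min a r x : sorted leq (a :: r) -> x \in a :: r -> a <= x.
Proof.
move=> hs; rewrite inE => /orP[/eqP->//|hx].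
exact: (allP (order_path_min leq_trans hs)).
Qed.

Lemma sorted_min_ltn a r x : sorted ltn (a :: r) -> x \in r -> a < x.
Proof. move=> hs hx; exact: (allP (order_path_min ltn_trans hs)). Qed.

Lemma uniq_sorted_ltn r : sorted leq r -> uniq r = sorted ltn r.
Proof. by move=> hs; rewrite ltn_sorted_uniq_leq hs andbT. Qed.

Lemma ltn_sorted_leq r : sorted ltn r -> sorted leq r.
Proof. by rewrite ltn_sorted_uniq_leq => /andP[]. Qed.

Lemma bij1 n : ptn_count n P1_pred = ptn_count n.+1 (fun p => uniq p && (1 \in p)).
Proof.
apply: (@ptn_bij _ _ _ _ (cons 1) behead).
- move=> r /and3P[hs hp /eqP hn]; rewrite /P1_pred rev_uniq all_rev => /andP[hu h1].
  rewrite /V /= rev_uniq mem_rev /= hp hn eqxx inE eqxx /= !andbT hu andbT.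
  apply/andP; split; last by apply/negP => /(allP h1).
  by case: r hs h1 {hp hn hu} => //= x r -> /andP[/ltnW -> _].
- move=> r /and3P[hs hp /eqP hn]; rewrite rev_uniq mem_rev => /andP[hu h1].
  case: r hs hp hn hu h1 => // a r hs /= /andP[ha hp] hn /andP[har hu] h1.
  have a1 : a = 1 by apply/eqP; rewrite eqn_leq ha (sorted_min hs h1).
  subst a.
  rewrite /V (path_sorted hs) hp /P1_pred rev_uniq all_rev hu /=.
  apply/andP; split; first by move: hn; rewrite add1n => -[->].
  apply/allP => x hx; have := allP hp x hx; rewrite leq_eqVlt => /orP[/eqP e|//].
  by subst x; rewrite hx in har.
- by [].
- move=> r /and3P[hs hp /eqP hn]; rewrite mem_rev => /andP[hu h1].
  case: r hs hp hn hu h1 => // a r hs /= /andP[ha hp] hn hu h1.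
  by have -> : a = 1 by apply/eqP; rewrite eqn_leq ha (sorted_min hs h1).
Qed.

Definition incr (r : seq nat) := if r is a :: r' then a.+1 :: r' else r.
Definition decr (r : seq nat) := if r is a :: r' then a.-1 :: r' else r.

Lemma path_lower (e : rel nat) a b r : (forall c, e a c -> e b c) -> path e a r -> path e b r.
Proof. by move=> h; case: r => //= c r /andP[/h -> ->]. Qed.

Lemma bij2 n : 0 < n ->
  ptn_count n P2_pred = ptn_count n.+1 (fun p => uniq p && ~~ (1 \in p)).
Proof.
move=> n0; apply: (@ptn_bij _ _ _ _ incr decr).
- move=> r /and3P[hs hp /eqP hn]; rewrite /P2_pred rev_uniq revK => /andP[hu hg].
  case: r hs hp hn hu hg => [|a r] hs hp hn hu hg; first by subst n.
  rewrite (uniq_sorted_ltn hs) in hu.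
  move: hp => /= /andP[ha hp].
  have hlt : sorted ltn (a.+1 :: r).
    case: r hs hu hg {hp hn} => //= b r _ /andP[hab ->] hg; rewrite andbT; lia.
  rewrite /V rev_uniq mem_rev (uniq_sorted_ltn (ltn_sorted_leq hlt)) hlt.
  rewrite (ltn_sorted_leq hlt) /= hp -hn eqxx /= inE negb_or.
  apply/andP; split; first by rewrite eqSS eq_sym -lt0n.
  by apply/negP => /(sorted_min_ltn hu); rewrite ltnNge ha.
- move=> r /and3P[hs hp /eqP hn]; rewrite rev_uniq mem_rev => /andP[hu h1].
  case: r hs hp hn hu h1 => // a r hs hp hn hu h1.
  rewrite (uniq_sorted_ltn hs) in hu.
  move: hp hn => /= /andP[ha hp] hn.
  rewrite inE negb_or in h1; case/andP: h1 => ha1 h1.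
  have a2 : 1 < a by move: ha1 ha; clear; case: a => // -[].
  have hlt : sorted ltn (a.-1 :: r).
    by apply: (path_lower _ hu) => c /=; lia.
  rewrite /V /P2_pred revK rev_uniq (uniq_sorted_ltn (ltn_sorted_leq hlt)) hlt.
  rewrite (ltn_sorted_leq hlt) /= hp !andbT.
  apply/andP; split; first by apply/andP; split; [lia | apply/eqP; lia].
  case: r hs hu {hlt hp hn h1} => //= b r _ /andP[hab _]; lia.
- by move=> [|a r].
- move=> r /and3P[hs hp /eqP hn] _; case: r hs hp hn => // a r hs /= /andP[ha _] _.
  by rewrite prednK.
Qed.

Lemma last_rev0 (r : seq nat) : last 0 (rev r) = head 0 r.
Proof. by case: r => //= a r; rewrite rev_cons last_rcons. Qed.

Lemma Drev k r : D_pred k (rev r) = [&& r != [::], count_mem (head 0 r) r == k &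
  all (fun x => (x == head 0 r) || (count_mem x r <= 1)) r].
Proof.
rewrite /D_pred last_rev0 count_rev all_rev.
have -> : (rev r != [::]) = (r != [::]) by case: r => // a r; rewrite rev_cons; case: (rev r).
rewrite -andbA; congr (_ && (_ && _)); apply: eq_all => x; by rewrite count_rev.
Qed.

Lemma P'rev k r : P'_pred k (rev r) = (count_mem 1 r == k.-1) &&
  all (fun x => (x == 1) || (count_mem x r <= 1)) r.
Proof.
rewrite /P'_pred count_rev all_rev; congr (_ && _); apply: eq_all => x; by rewrite count_rev.
Qed.

Lemma bij3 k n : 1 < k ->
  P' k n = ptn_count n.+1 (fun p => D_pred k p && (last 0 p == 1)).
Proof.
move=> k2; apply: (@ptn_bij _ _ _ _ (cons 1) behead).
- move=> r /and3P[hs hp /eqP hn]; rewrite P'rev => /andP[hc ha].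
  rewrite Drev last_rev0 /= eqxx /V /= hp hn eqxx /= !andbT.
  apply/and3P; split.
  + by case: r hs hp {hc ha hn} => //= x r -> /andP[-> _].
  + by rewrite (eqP hc) add1n prednK // ltnW.
  + apply/allP => x hx; case: (eqVneq x 1) => //= ne.
    have := allP ha x hx; rewrite (negbTE ne) /=.
    by [].
- move=> r /and3P[hs hp /eqP hn]; rewrite Drev last_rev0 => /andP[/and3P[_ hc ha] h1].
  case: r hs hp hn hc ha h1 => // a r hs hp hn hc ha /= /eqP ea; subst a.
  move: hp hn hc => /= hp hn hc.
  rewrite /V P'rev (path_sorted hs) hp /=.
  apply/and3P; split.
  + by move: hn; rewrite add1n => -[->].
  + move: hc; rewrite add1n => /eqP <- /=. done.
  + apply/allP => x hx; case: (eqVneq x 1) => //= ne.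
    have := allP ha x; rewrite inE hx orbT => /(_ isT).
    by rewrite /= (negbTE ne) eq_sym (negbTE ne).
- by [].
- move=> r _; rewrite Drev last_rev0 => /andP[/and3P[hne _ _] h1].
  by case: r hne h1 => // a r _ /= /eqP ->.
Qed.

Definition LL (r : seq nat) := rev (undup (rev r)).

Lemma LL_sorted r : sorted leq r -> sorted leq (LL r).
Proof.
move=> hs; rewrite /LL rev_sorted.
apply: (subseq_sorted geq_trans' (undup_subseq _)).
by rewrite rev_sorted.
Qed.

Lemma LL_uniq r : uniq (LL r).
Proof. by rewrite /LL rev_uniq undup_uniq. Qed.

Lemma LL_mem r : LL r =i r.
Proof. by move=> x; rewrite /LL mem_rev mem_undup mem_rev. Qed.

Lemma P''rev k r : P''_pred k (rev r) =
  if LL r is s1 :: s2 :: _ then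
    [&& s2 == s1 + 1, count_mem s1 r == 1, count_mem s2 r == k.-1 &
    all (fun x => (x == s2) || (count_mem x r <= 1)) r]
  else false.
Proof.
rewrite /P''_pred -/(LL r); case: (LL r) => [|s1 [|s2 t]] //.
rewrite !count_rev all_rev -!andbA; congr [&& _, _, _ & _].
by apply: eq_all => x; rewrite count_rev.
Qed.

Lemma head_eq a r b t : sorted leq (a :: r) -> sorted leq (b :: t) ->
  a \in b :: t -> b \in a :: r -> a = b.
Proof.
move=> h1 h2 m1 m2; apply/eqP; rewrite eqn_leq (sorted_min h1 m2) (sorted_min h2 m1).
done.
Qed.

Lemma bij4 k n : 1 < k ->
  P'' k n = ptn_count n.+1 (fun p => D_pred k p && ~~ (last 0 p == 1)).
Proof.
move=> k2; apply: (@ptn_bij _ _ _ _ incr decr).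
- move=> r /and3P[hs hp /eqP hn]; rewrite P''rev.
  have hLs := LL_sorted hs; have hLu := LL_uniq r; have hLm := LL_mem r.
  case E: (LL r) hLs hLu hLm => [|s1 [|s2 t]] // hLs hLu hLm.
  case/and4P=> /eqP e12 hc1 hc2 ha.
  have s1r : s1 \in r by rewrite -hLm inE eqxx.
  clear E.   case: r hs hp hn hc1 hc2 ha hLm s1r => // a r1 hs hp hn hc1 hc2 ha hLm s1r.
  have ea : a = s1.
    apply: (head_eq hs hLs) => //; by rewrite hLm inE eqxx.
  subst a.
  have s1r1 : s1 \notin r1.
    by apply/count_memPn; move: hc1; rewrite /= eqxx add1n eqSS => /eqP.
  have s2r1 : s2 \in r1.
    have : s2 \in s1 :: r1 by rewrite -hLm !inE eqxx orbT.
    rewrite inE => /orP[/eqP h|//]; move: h; rewrite e12; lia.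
  case: r1 hs hp hn hc1 hc2 ha hLm s1r s1r1 s2r1 => // c r2 hs hp hn hc1 hc2 ha hLm s1r s1r1 s2r1.
  have hLs' := path_sorted hLs.
  have ec : c = s2.
    apply: (head_eq (path_sorted hs) hLs') => //.
    have : c \in s1 :: s2 :: t by rewrite hLm !inE eqxx orbT.
    rewrite inE => /orP[/eqP h|//]; by move: s1r1; rewrite h inE eqxx.
  subst c.
  move: hp hn => /= /and3P[hs1 hs2 hp] hn.
  have s2e : s2 = s1.+1 by rewrite e12 addn1.
  clear e12; subst s2.
  rewrite Drev last_rev0 /V /= !eqxx /=.
  apply/and3P; split.
  - apply/and3P; split => //; last by apply/eqP; lia.
    by rewrite ltnSn; exact: (path_sorted hs).
  - apply/andP; split.
    + move: hc2 => /= /eqP; rewrite eqxx (ltn_eqF (ltnSn s1)) => h; apply/eqP; lia.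
    + apply/allP => x hx; case: (eqVneq x s1.+1) => //= ne.
      have := allP ha x; rewrite !inE hx !orbT => /(_ isT).
      rewrite (negbTE ne) /= !(eq_sym s1.+1 x) (negbTE ne) !add0n => h.
      exact: leq_trans (leq_addl _ _) h.
  - by rewrite eqSS -lt0n.
- move=> r /and3P[hs hp /eqP hn]; rewrite Drev last_rev0 => /andP[/and3P[hne hc ha] h1].
  case: r hs hp hn hne hc ha h1 => // b r1 hs hp hn _ hc ha /= h1.
  move: hp => /= /andP[hb hp].
  have b2 : 1 < b by move: h1 hb; clear; case: b => // -[].
  move: hc; rewrite /= eqxx add1n => hc.
  have br1 : b \in r1.
    apply/negPn/negP => /count_memPn h; move: hc; rewrite h => /eqP; lia.
  case: r1 hs hp hn ha hc br1 => // c r2 hs hp hn ha hc br1.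
  have ec : c = b.
    apply/eqP; rewrite eqn_leq (sorted_min (path_sorted hs) br1).
    by move: hs => /= /andP[].
  subst c.
  have hs2 : sorted leq (b :: r2) := path_sorted hs.
  rewrite /V P''rev.
  have hs' : sorted leq (b.-1 :: b :: r2) by rewrite /= leq_pred.
  have hLs := LL_sorted hs'; have hLu := LL_uniq (b.-1 :: b :: r2);
    have hLm := LL_mem (b.-1 :: b :: r2).
  have bm : b.-1 \notin b :: r2.
    by apply/negP => /(sorted_min hs2); rewrite leqNgt ltn_predL ltnW.
  case E: (LL (b.-1 :: b :: r2)) hLs hLu hLm => [|x L'] hLs hLu hLm.
    by have := hLm b.-1; rewrite inE eqxx.
  have ex : x = b.-1.
    symmetry; apply: (head_eq hs' hLs); first by rewrite hLm inE eqxx.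
    by rewrite -hLm inE eqxx.
  subst x.
  have bL' : b \in L'.
    have : b \in b.-1 :: L' by rewrite hLm !inE eqxx orbT.
    rewrite inE => /orP[/eqP h|//]; by move: bm; rewrite -h inE eqxx.
  case: L' E hLs hLu hLm bL' => // y t E hLs hLu hLm bL'.
  have ey : y = b.
    apply: (head_eq (path_sorted hLs) hs2) => //.
    have : y \in b.-1 :: b :: r2 by rewrite -hLm !inE eqxx orbT.
    rewrite inE => /orP[/eqP h|//]; move: hLu; by rewrite /= h inE eqxx.
  subst y.
  move: hp => /= /andP[_ hp].
  have nb : (b.-1 == b) = false by rewrite ltn_eqF // ltn_predL ltnW.
  have nb' : (b == b.-1) = false by rewrite eq_sym nb.
  have c0 : count_mem b.-1 r2 = 0.
    by apply/count_memPn; move: bm; rewrite inE negb_or => /andP[].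
  apply/andP; split.
    apply/and3P; split => //=.
    + by apply/and3P; split => //; lia.
    + by apply/eqP; move: hn => /=; lia.
  rewrite !eqxx nb nb' c0 /= ?orbT.
  apply/and3P; split.
  - apply/eqP; lia.
  - move: hc => /= /eqP; rewrite eqxx => h; apply/eqP; lia.
  - apply/allP => z hz; case: (eqVneq z b) => //= ne.
    have nz : (b.-1 == z) = false.
      by apply/negP => /eqP e; move: bm; rewrite e inE hz orbT.
    have := allP ha z; rewrite !inE hz !orbT => /(_ isT) /=.
    rewrite (negbTE ne) !(eq_sym b z) (negbTE ne) nz /=; lia.
- by move=> [|a r].
- move=> r /and3P[hs hp /eqP hn] _; case: r hs hp hn => // a r hs /= /andP[ha _] _.
  by rewrite prednK.
Qed.

Theorem theorem4 (k n : nat) : 2 <= k -> 1 <= n ->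
  A k n = ((D k n.+1)%:R / 2 : rat)%R.
Proof.
move=> k2 n1.
have e : P1 n + P' k n + P2 n + P'' k n = D k n.+1.
  rewrite (D_split _ (ltnW k2)) (ptn_split _ (D_pred k) (fun p => last 0 p == 1)).
  rewrite (ptn_split _ uniq (fun p => 1 \in p)).
  rewrite /P1 /P2 bij1 bij2 // bij3 // bij4 //.
  by rewrite addnC !addnA [X in X + _ = _]addnC !addnA addnC !addnA.
by rewrite /A e.
Qed.
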